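(* For a weakly coupled POMDP and horizon $T$, let $(\tau^m,\delta^m)_{m\in[M]}$ be an optimal solution of MILP (LB). Then the policy $\delta$ defined by $\delta^t_{\mathbf a|\mathbf o}=\prod_{m=1}^M\delta^{t,m}_{a^m|o^m}$ is an optimal deterministic decomposable policy for the weakly coupled POMDP problem with memoryless policies. Furthermore, MILP (IP) is a relaxation of MILP (LB) (every feasible solution of (LB) yields a feasible solution of (IP) with the same objective value). In particular $z_{\mathrm{LB}}\le v^*_{\mathrm{ml}}$ and $z_{\mathrm{LB}}\le z_{\mathrm{IP}}$.
   Context: Weakly coupled POMDP: components $m\in[M]$, each a POMDP $(\mathcal X_S^m,\mathcal X_O^m,\mathcal X_A^m,\mathfrak p^m,\mathbf r^m)$ with initial distribution $p^m(s)$, emissions $p^m(o|s)$, transitions $p^m(s'|s,a)$, reward $r^m(s,a,s')$; $\mathbf D^m:\mathcal X_A^m\to\mathbb R^q$, $\mathbf b\in\mathbb R^q_{\ge0}$. Full system: $\mathcal X_S=\prod_m\mathcal X_S^m$, $\mathcal X_O=\prod_m\mathcal X_O^m$, $\mathcal X_A=\{\mathbf a\in\prod_m\mathcal X_A^m:\sum_m\mathbf D^m(a^m)\le\mathbf b\}$ (nonempty), product initial/emission/transition probabilities and additive reward $r=\sum_m r^m$. A memoryless policy $\delta^t_{\mathbf a|\mathbf o}$ ($\mathbf a\in\mathcal X_A$) is a conditional distribution on $\mathcal X_A$ for each $\mathbf o,t$; $v^*_{\mathrm{ml}}$ is the maximum over these of $\mathbb E_\delta[\sum_{t=1}^T r(\mathbf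 S_t,\mathbf A_t,\mathbf S_{t+1})]$. A policy is decomposable if $\delta^t_{\mathbf a|\mathbf o}=\prod_m\delta^{t,m}_{a^m|o^m}$ for memoryless policies $\delta^m$ on component $m$, and deterministic if it takes values in $\{0,1\}$. For a POMDP, $\mathcal Q^{\mathrm d}(T,\mathcal X_S,\mathcal X_O,\mathcal X_A,\mathfrak p)$ is the set of $(\tau,\delta)$ with $\delta^t_{a|o}\in\{0,1\}$, $\sum_a\delta^t_{a|o}=1$, nonnegative $\tau$ satisfying (i) $\tau^1_s=p(s)$; (ii) $\sum_{o,a}\tau^t_{soa}=\nu^t_s$, $\nu^1_s=\tau^1_s$, $\nu^t_s=\sum_{s'',a''}\tau^{t-1}_{s''a''s}$; (iii) $\sum_{\bar s}\tau^t_{sa\bar s}=\sum_o\tau^t_{soa}$; (iv) $\tau^t_{sas'}=p(s'|s,a)\sum_{\bar s}\tau^t_{sa\bar s}$; (McCormick) $\tau^t_{soa}\le p(o|s)\nu^t_s$, $\tau^t_{soa}\le\delta^t_{a|o}$, $\tau^t_{soa}\ge p(o|s)\nu^t_s+\delta^t_{a|o}-1$. MILP (IP): maximize $\sum_t\sum_m\sum_{s,a,s'}r^m(s,a,s')\tau^{t,m}_{sas'}$ s.t. $(\tau^m,\delta^m)\in\mathcal Q^{\mathrm d}(T,\mathcal X_S^m,\mathcal X_O^m,\mathcal X_A^m,\mathfrak p^m)$ for all $m$, $\tau^{t,m}_a=\sum_{s,o}\tau^{t,m}_{soa}$, $\sum_m\sum_a\mathbf D^m(a)\tau^{t,m}_a\le\mathbf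 b$ for all $t$; value $z_{\mathrm{IP}}$. MILP (LB): same objective, s.t. $(\tau^m,\delta^m)\in\mathcal Q^{\mathrm d}(T,\mathcal X_S^m,\mathcal X_O^m,\mathcal X_A^m,\mathfrak p^m)$ for all $m$ and $\sum_m\sum_{a\in\mathcal X_A^m}\mathbf D^m(a)\delta^{t,m}_{a|o^m}\le\mathbf b$ for all $\mathbf o\in\mathcal X_O$, $t\in[T]$; value $z_{\mathrm{LB}}$. *)

(* Defs.v *)
From HB Require Import structures.
From mathcomp Require Import all_boot all_order all_algebra.
Set Implicit Arguments. Unset Strict Implicit. Unset Printing Implicit Defensive.
Import Order.TTheory GRing.Theory Num.Theory.
Local Open Scope ring_scope.

(* Conventions: time steps t = 1..T of the paper are indexed by t = 0..T-1 (nat);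
   vectors of R^q are functions 'I_q -> R with componentwise order. *)

Section Pomdp.
Variable R : realFieldType.
Variables (S O A : finType).

(* initial distribution, emission p(o|s), transition p(s'|s,a), reward r(s,a,s') *)
Variables (p0 : S -> R) (pe : S -> O -> R) (pt : S -> A -> S -> R)
          (rw : S -> A -> S -> R).

Definition is_distr (f : S -> R) := (forall s, 0 <= f s) /\ \sum_s f s = 1.

Definition is_pomdp :=
  is_distr p0 /\
  (forall s, (forall o, 0 <= pe s o) /\ \sum_o pe s o = 1) /\
  (forall s a, (forall s', 0 <= pt s a s') /\ \sum_s' pt s a s' = 1).

Definition memoryless_policy (T : nat) (del : nat -> O -> A -> R) :=
  forall t, (t < T)%N ->
    forall o, (forall a, 0 <= del t o a) /\ \sum_a del t o a = 1.

Definition deterministic_policy (T : nat) (del : nat -> O -> A -> R) :=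
  forall t, (t < T)%N -> forall o a, del t o a = 0 \/ del t o a = 1.

Definition traj_prob (T : nat) (del : nat -> O -> A -> R)
  (s : {ffun 'I_T.+1 -> S}) (o : {ffun 'I_T -> O}) (a : {ffun 'I_T -> A}) : R :=
  p0 (s ord0) *
  \prod_(t < T) (pe (s (widen_ord (leqnSn T) t)) (o t) * del t (o t) (a t)
                 * pt (s (widen_ord (leqnSn T) t)) (a t) (s (lift ord0 t))).

Definition policy_value (T : nat) (del : nat -> O -> A -> R) : R :=
  \sum_(s : {ffun 'I_T.+1 -> S}) \sum_(o : {ffun 'I_T -> O})
   \sum_(a : {ffun 'I_T -> A})
    traj_prob del s o a *
    \sum_(t < T) rw (s (widen_ord (leqnSn T) t)) (a t) (s (lift ord0 t)).

Record Qvars := mkQvars {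
  q_ts   : S -> R;
  q_tsoa : nat -> S -> O -> A -> R;
  q_tsas : nat -> S -> A -> S -> R;
  q_del  : nat -> O -> A -> R
}.

Definition q_nu (x : Qvars) (t : nat) (s : S) : R :=
  if t is t'.+1 then \sum_(s'' : S) \sum_(a'' : A) q_tsas x t' s'' a'' s
  else q_ts x s.

Definition in_Qd (T : nat) (x : Qvars) : Prop :=
  (forall t, (t < T)%N -> forall o,
      (forall a, q_del x t o a = 0 \/ q_del x t o a = 1) /\
      \sum_a q_del x t o a = 1) /\
  (forall s, 0 <= q_ts x s) /\
  (forall t, (t < T)%N -> forall s o a, 0 <= q_tsoa x t s o a) /\
  (forall t, (t < T)%N -> forall s a s', 0 <= q_tsas x t s a s') /\
  (forall s, q_ts x s = p0 s) /\
  (forall t, (t < T)%N -> forall s,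
      \sum_o \sum_a q_tsoa x t s o a = q_nu x t s) /\
  (forall t, (t < T)%N -> forall s a,
      \sum_sb q_tsas x t s a sb = \sum_o q_tsoa x t s o a) /\
  (forall t, (t < T)%N -> forall s a s',
      q_tsas x t s a s' = pt s a s' * \sum_sb q_tsas x t s a sb) /\
  (* McCormick *)
  (forall t, (t < T)%N -> forall s o a,
      q_tsoa x t s o a <= pe s o * q_nu x t s /\
      q_tsoa x t s o a <= q_del x t o a /\
      pe s o * q_nu x t s + q_del x t o a - 1 <= q_tsoa x t s o a).

End Pomdp.

Section Weakly.
Variable R : realFieldType.
Variables (M q : nat) (S O A : 'I_M -> finType).
Variables (p0 : forall m, S m -> R) (pe : forall m, S m -> O m -> R)
          (pt : forall m, S m -> A m -> S m -> R)
          (rw : forall m, S m -> A m -> S m -> R)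
          (D : forall m, A m -> 'I_q -> R) (b : 'I_q -> R).

Definition jstate := {dffun forall m, S m}.
Definition jobs := {dffun forall m, O m}.
Definition jact := {dffun forall m, A m}.

Definition feasible_action (a : jact) : bool :=
  [forall i : 'I_q, \sum_(m < M) D (a m) i <= b i].

Definition XA := {a : jact | feasible_action a}.

Definition full_p0 (s : jstate) : R := \prod_(m < M) p0 (s m).
Definition full_pe (s : jstate) (o : jobs) : R := \prod_(m < M) pe (s m) (o m).
Definition full_pt (s : jstate) (a : XA) (s' : jstate) : R :=
  \prod_(m < M) pt (s m) (val a m) (s' m).
Definition full_rw (s : jstate) (a : XA) (s' : jstate) : R :=
  \sum_(m < M) rw (s m) (val a m) (s' m).

Definition full_value (T : nat) (del : nat -> jobs -> XA -> R) : R :=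
  policy_value full_p0 full_pe full_pt full_rw T del.

Definition full_policy (T : nat) (del : nat -> jobs -> XA -> R) :=
  memoryless_policy T del.

Definition decomposable (T : nat) (del : nat -> jobs -> XA -> R) :=
  exists delm : forall m, nat -> O m -> A m -> R,
    (forall m, memoryless_policy T (delm m)) /\
    forall t, (t < T)%N -> forall o a,
      del t o a = \prod_(m < M) delm m t (o m) (val a m).

Definition sol := forall m, Qvars R (S m) (O m) (A m).

Definition milp_obj (T : nat) (x : sol) : R :=
  \sum_(t < T) \sum_(m < M) \sum_(s : S m) \sum_(a : A m) \sum_(s' : S m)
     rw s a s' * q_tsas (x m) t s a s'.

Definition IP_feasible (T : nat) (x : sol) : Prop :=
  (forall m, in_Qd (@p0 m) (@pe m) (@pt m) T (x m)) /\
  forall t, (t < T)%N -> forall i : 'I_q,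
    \sum_(m < M) \sum_(a : A m)
       D a i * (\sum_(s : S m) \sum_(o : O m) q_tsoa (x m) t s o a) <= b i.

Definition LB_feasible (T : nat) (x : sol) : Prop :=
  (forall m, in_Qd (@p0 m) (@pe m) (@pt m) T (x m)) /\
  forall (o : jobs) t, (t < T)%N -> forall i : 'I_q,
    \sum_(m < M) \sum_(a : A m) D a i * q_del (x m) t (o m) a <= b i.

Definition product_policy (x : sol) : nat -> jobs -> XA -> R :=
  fun t o a => \prod_(m < M) q_del (x m) t (o m) (val a m).

End Weakly.

(* Main.v *)
From HB Require Import structures.
From mathcomp Require Import all_boot all_order all_algebra.
Require Import Defs.
From mathcomp Require Import zify ring lra.
Import Order.TTheory GRing.Theory Num.Theory.
Set Implicit Arguments. Unset Strict Implicit. Unset Printing Implicit Defensive.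
Local Open Scope ring_scope.

Definition ext (X : finType) (n : nat) (g : {ffun 'I_n -> X}) (x : X) : {ffun 'I_n.+1 -> X} :=
  [ffun i => if unlift ord_max i is Some j then g j else x].

Lemma ext_lift (X : finType) n (g : {ffun 'I_n -> X}) x j : ext g x (lift ord_max j) = g j.
Proof. by rewrite ffunE liftK. Qed.

Lemma ext_max (X : finType) n (g : {ffun 'I_n -> X}) x : ext g x ord_max = x.
Proof. by rewrite ffunE unlift_none. Qed.

Lemma sum_ext (R : nmodType) (X : finType) n (F : {ffun 'I_n.+1 -> X} -> R) :
  \sum_(f : {ffun 'I_n.+1 -> X}) F f = \sum_(g : {ffun 'I_n -> X}) \sum_(x : X) F (ext g x).
Proof.
rewrite pair_big /=.
rewrite (reindex (fun p : {ffun 'I_n -> X} * X => ext p.1 p.2)) //.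
exists (fun f : {ffun 'I_n.+1 -> X} => ([ffun j : 'I_n => f (lift ord_max j)] : {ffun 'I_n -> X}, f ord_max)).
  by move=> [g x] _ /=; rewrite ext_max; congr (_, _); apply/ffunP => j; rewrite ffunE ext_lift.
move=> f _ /=; apply/ffunP => i; rewrite ffunE.
case: unliftP => [j ->|->]; by rewrite ?ffunE.
Qed.
Lemma big_dffun_distr (R : comNzRingType) (I : finType) (T_ : I -> finType)
  (F : forall i, T_ i -> R) :
  \sum_(f : {dffun forall i, T_ i}) \prod_i F i (f i) = \prod_i \sum_(x : T_ i) F i x.
Proof.
rewrite (reindex (@dffun_of_fprod I T_)); last exact/onW_bij/dffun_of_fprod_bij.
pose P_ := fun i => [ffun x : T_ i => F i x].
transitivity (\sum_(t : fprod T_) \prod_(i in I) P_ i (t i)).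
  by apply: eq_bigr => t _; apply: eq_bigr => i _; rewrite !ffunE.
rewrite (@big_fprod R 0 1 *%R +%R I T_ P_).
rewrite -(bigA_distr_big_dep (tagged_with T_) (fun i j => untag 0 (P_ i) j)).
apply: eq_bigr => i _.
rewrite (big_tag (fun i x => F i x) i); apply: eq_bigr => j _.
rewrite /P_.
case: (eqVneq (tag j) i) => e.
  by rewrite !untagE ffunE.
by rewrite !untag_dflt.
Qed.
Lemma sum_card1 (R : nmodType) (X : finType) (c : R) : #|X| = 1%N -> \sum_(i : X) c = c.
Proof. move=> H. by rewrite sumr_const H. Qed.

Section Gen.
Variable R : realFieldType.
Variables (S O A : finType).
Variables (p0 : S -> R) (pe : S -> O -> R) (pt : S -> A -> S -> R) (rw : S -> A -> S -> R).
Variable del : nat -> O -> A -> R.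

Fixpoint nuF (t : nat) : S -> R := fun s' =>
  if t is t'.+1 then \sum_s \sum_a (pt s a s' * \sum_o (pe s o * nuF t' s * del t' o a))
  else p0 s'.

Definition tauF t s a s' := pt s a s' * \sum_o (pe s o * nuF t s * del t o a).

Lemma ordA n (j : 'I_n) : widen_ord (leqnSn n) j = lift ord_max j.
Proof. apply: val_inj => /=; rewrite /bump; have := ltn_ord j; case: leqP => //; lia. Qed.
Lemma ordB n : (ord0 : 'I_n.+2) = lift ord_max ord0.
Proof. by apply: val_inj => /=; rewrite /bump. Qed.
Lemma ordC n (j : 'I_n) : (lift ord0 (widen_ord (leqnSn n) j) : 'I_n.+2) = lift ord_max (lift ord0 j).
Proof. apply: val_inj => /=; rewrite /bump; have := ltn_ord j; case: leqP => //; lia. Qed.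
Lemma ordD n : (lift ord0 (ord_max : 'I_n.+1) : 'I_n.+2) = ord_max.
Proof. by apply: val_inj. Qed.

Lemma ext_w (X : finType) n (g : {ffun 'I_n -> X}) x j : ext g x (widen_ord (leqnSn n) j) = g j.
Proof. by rewrite ordA ext_lift. Qed.
Lemma ext_ww (X : finType) n (g : {ffun 'I_n.+1 -> X}) x (j : 'I_n) :
  ext g x (widen_ord (leqnSn n.+1) (widen_ord (leqnSn n) j)) = g (widen_ord (leqnSn n) j).
Proof. by rewrite ext_w. Qed.
Lemma ext_lw (X : finType) n (g : {ffun 'I_n.+1 -> X}) x (j : 'I_n) :
  ext g x (lift ord0 (widen_ord (leqnSn n) j)) = g (lift ord0 j).
Proof. by rewrite ordC ext_lift. Qed.
Lemma ext_0 (X : finType) n (g : {ffun 'I_n.+1 -> X}) x : ext g x ord0 = g ord0.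
Proof. by rewrite ordB ext_lift. Qed.
Lemma ext_wmax (X : finType) n (g : {ffun 'I_n.+1 -> X}) x :
  ext g x (widen_ord (leqnSn n.+1) ord_max) = g ord_max.
Proof. by rewrite ext_w. Qed.
Lemma ext_lmax (X : finType) n (g : {ffun 'I_n.+1 -> X}) x :
  ext g x (lift ord0 (ord_max : 'I_n.+1)) = x.
Proof. by rewrite ordD ext_max. Qed.

Lemma traj_ext n (s : {ffun 'I_n.+1 -> S}) x (o : {ffun 'I_n -> O}) o' a a' :
  traj_prob p0 pe pt del (ext s x) (ext o o') (ext a a') =
  traj_prob p0 pe pt del s o a * (pe (s ord_max) o' * del n o' a' * pt (s ord_max) a' x).
Proof.
rewrite /traj_prob big_ord_recr /= mulrA ext_0; congr (_ * _).
  by congr (_ * _); apply: eq_bigr => j _; rewrite !ext_ww !ext_w ext_lw.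
by rewrite ext_wmax ext_lmax !ext_max.
Qed.
Lemma split3 n (F : {ffun 'I_n.+2 -> S} -> {ffun 'I_n.+1 -> O} -> {ffun 'I_n.+1 -> A} -> R) :
  \sum_s \sum_o \sum_a F s o a =
  \sum_(s0 : {ffun 'I_n.+1 -> S}) \sum_(o0 : {ffun 'I_n -> O}) \sum_(a0 : {ffun 'I_n -> A})
    \sum_x \sum_o' \sum_a' F (ext s0 x) (ext o0 o') (ext a0 a').
Proof.
rewrite sum_ext; apply: eq_bigr => s0 _.
under eq_bigr => x _ do rewrite sum_ext.
rewrite exchange_big; apply: eq_bigr => o0 _.
under eq_bigr => x _ do under eq_bigr => o' _ do rewrite sum_ext.
under eq_bigr => x _ do rewrite exchange_big.
by rewrite exchange_big.
Qed.

Lemma marg n (h : S -> R) :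
  \sum_(s : {ffun 'I_n.+1 -> S}) \sum_(o : {ffun 'I_n -> O}) \sum_(a : {ffun 'I_n -> A})
     traj_prob p0 pe pt del s o a * h (s ord_max) = \sum_x nuF n x * h x.
Proof.
elim: n h => [|n IH] h.
  rewrite sum_ext.
  under eq_bigr => g _ do under eq_bigr => x _ do under eq_bigr => o _ do
    under eq_bigr => a _ do rewrite /traj_prob big_ord0 mulr1.
  have c1 (X : finType) : #|{ffun 'I_0 -> X}| = 1%N by rewrite card_ffun card_ord expn0.
  under eq_bigr => g _ do under eq_bigr => x _ do under eq_bigr => o _ do rewrite (sum_card1 _ (c1 A)).
  under eq_bigr => g _ do under eq_bigr => x _ do rewrite (sum_card1 _ (c1 O)).
  have e : (ord0 : 'I_1) = ord_max by apply: val_inj.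
  under eq_bigr => g _ do under eq_bigr => x _ do rewrite e !ext_max.
  rewrite (sum_card1 _ (c1 S)).
  by [].
rewrite split3.
under eq_bigr => s0 _ do under eq_bigr => o0 _ do under eq_bigr => a0 _ do
  under eq_bigr => x _ do under eq_bigr => o' _ do under eq_bigr => a' _ do
  rewrite traj_ext ext_max -mulrA.
under eq_bigr => s0 _ do under eq_bigr => o0 _ do under eq_bigr => a0 _ do
  under eq_bigr => x _ do under eq_bigr => o' _ do rewrite -mulr_sumr.
under eq_bigr => s0 _ do under eq_bigr => o0 _ do under eq_bigr => a0 _ do
  under eq_bigr => x _ do rewrite -mulr_sumr.
under eq_bigr => s0 _ do under eq_bigr => o0 _ do under eq_bigr => a0 _ do
  rewrite -mulr_sumr.
rewrite (IH (fun y => \sum_x \sum_o' \sum_a' (pe y o' * del n o' a' * pt y a' x * h x))).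
rewrite /=.
under eq_bigr => y _ do rewrite mulr_sumr.
under [RHS]eq_bigr => x _ do rewrite mulr_suml.
rewrite exchange_big; apply: eq_bigr => x _; apply: eq_bigr => y _.
rewrite mulr_sumr mulr_suml.
under eq_bigr => o _ do rewrite mulr_sumr.
under [in RHS]eq_bigr => a _ do rewrite mulr_sumr mulr_suml.
rewrite [in RHS]exchange_big.
apply: eq_bigr => o _; apply: eq_bigr => a _.
by ring.
Qed.
Lemma Lsum (T : nat)
  (Hpe : forall s, \sum_o pe s o = 1)
  (Hpt : forall s a, \sum_s' pt s a s' = 1)
  (Hdel : forall t, (t < T)%N -> forall o, \sum_a del t o a = 1) n :
  (n <= T)%N -> forall (t : 'I_n) (g : S -> A -> S -> R),
  \sum_(s : {ffun 'I_n.+1 -> S}) \sum_(o : {ffun 'I_n -> O}) \sum_(a : {ffun 'I_n -> A})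
     traj_prob p0 pe pt del s o a * g (s (widen_ord (leqnSn n) t)) (a t) (s (lift ord0 t))
  = \sum_x \sum_y \sum_z g x y z * tauF t x y z.
Proof.
elim: n => [|n IH] HnT; first by case.
have one y : \sum_x \sum_o' \sum_a' pe y o' * del n o' a' * pt y a' x = 1.
  rewrite exchange_big; under eq_bigr => o' _ do rewrite exchange_big.
  rewrite -(Hpe y); apply: eq_bigr => o' _.
  under eq_bigr => a' _ do rewrite -mulr_sumr Hpt mulr1.
  by rewrite -mulr_sumr Hdel // mulr1.
move=> t g; rewrite split3.
case: (unliftP ord_max t) => [j ->|->].
  under eq_bigr => s0 _ do under eq_bigr => o0 _ do under eq_bigr => a0 _ do
    under eq_bigr => x _ do under eq_bigr => o' _ do under eq_bigr => a' _ do
    rewrite traj_ext -ordA ext_ww ext_lw ext_w mulrAC.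
  under eq_bigr => s0 _ do under eq_bigr => o0 _ do under eq_bigr => a0 _ do
    under eq_bigr => x _ do under eq_bigr => o' _ do rewrite -mulr_sumr.
  under eq_bigr => s0 _ do under eq_bigr => o0 _ do under eq_bigr => a0 _ do
    under eq_bigr => x _ do rewrite -mulr_sumr.
  under eq_bigr => s0 _ do under eq_bigr => o0 _ do under eq_bigr => a0 _ do
    rewrite -mulr_sumr one mulr1.
  rewrite lift_max; exact: IH (ltnW HnT) j g.
under eq_bigr => s0 _ do under eq_bigr => o0 _ do under eq_bigr => a0 _ do
  under eq_bigr => x _ do under eq_bigr => o' _ do under eq_bigr => a' _ do
  rewrite traj_ext ext_wmax ext_lmax ext_max -mulrA.
under eq_bigr => s0 _ do under eq_bigr => o0 _ do under eq_bigr => a0 _ do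
  under eq_bigr => x _ do under eq_bigr => o' _ do rewrite -mulr_sumr.
under eq_bigr => s0 _ do under eq_bigr => o0 _ do under eq_bigr => a0 _ do
  under eq_bigr => x _ do rewrite -mulr_sumr.
under eq_bigr => s0 _ do under eq_bigr => o0 _ do under eq_bigr => a0 _ do
  rewrite -mulr_sumr.
rewrite (marg n (fun y => \sum_x \sum_o' \sum_a' (pe y o' * del n o' a' * pt y a' x * g y a' x))).
apply: eq_bigr => y _ /=.
rewrite mulr_sumr exchange_big /=.
apply: eq_bigr => x _.
rewrite mulr_sumr; under [in LHS]eq_bigr => o _ do rewrite mulr_sumr.
rewrite exchange_big; apply: eq_bigr => a _.
rewrite /tauF mulrA mulr_sumr; apply: eq_bigr => o _.
by ring.
Qed.
Lemma value_eq (T : nat)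
  (Hpe : forall s, \sum_o pe s o = 1)
  (Hpt : forall s a, \sum_s' pt s a s' = 1)
  (Hdel : forall t, (t < T)%N -> forall o, \sum_a del t o a = 1) :
  policy_value p0 pe pt rw T del =
  \sum_(t < T) \sum_x \sum_y \sum_z rw x y z * tauF t x y z.
Proof.
rewrite /policy_value.
under eq_bigr => s _ do under eq_bigr => o _ do under eq_bigr => a _ do rewrite mulr_sumr.
under eq_bigr => s _ do under eq_bigr => o _ do rewrite exchange_big.
under eq_bigr => s _ do rewrite exchange_big.
rewrite exchange_big; apply: eq_bigr => t _.
exact: (Lsum Hpe Hpt Hdel (leqnn T)).
Qed.

Lemma nuF_ge0 (T : nat) (Hp0 : forall s, 0 <= p0 s) (Hpe : forall s o, 0 <= pe s o)
  (Hpt : forall s a s', 0 <= pt s a s')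
  (Hdel : forall t, (t < T)%N -> forall o a, 0 <= del t o a) :
  forall t, (t <= T)%N -> forall s, 0 <= nuF t s.
Proof.
elim=> [|t IH] HT s /=; first exact: Hp0.
apply: sumr_ge0 => x _; apply: sumr_ge0 => a _; apply: mulr_ge0 => //.
apply: sumr_ge0 => o _; apply: mulr_ge0; first apply: mulr_ge0 => //.
  exact: IH (ltnW HT) x.
exact: Hdel.
Qed.

Lemma nuF_sum (T : nat) (Hp0 : \sum_s p0 s = 1)
  (Hpe : forall s, \sum_o pe s o = 1)
  (Hpt : forall s a, \sum_s' pt s a s' = 1)
  (Hdel : forall t, (t < T)%N -> forall o, \sum_a del t o a = 1) :
  forall t, (t <= T)%N -> \sum_s nuF t s = 1.
Proof.
elim=> [|t IH] HT //=.
rewrite exchange_big /= -(IH (ltnW HT)); apply: eq_bigr => x _.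
rewrite exchange_big /=.
under eq_bigr => a _ do rewrite -mulr_suml Hpt mul1r.
rewrite exchange_big /= -[RHS]mulr1 -(Hpe x) mulr_sumr; apply: eq_bigr => o _.
under eq_bigr => a _ do rewrite (mulrC (pe x o)) -mulrA.
by rewrite -mulr_sumr -mulr_sumr Hdel // mulr1.
Qed.

Lemma tauF_sum t : \sum_x \sum_y \sum_z tauF t x y z = \sum_z nuF t.+1 z.
Proof.
under eq_bigr => x _ do rewrite exchange_big.
by rewrite exchange_big.
Qed.
End Gen.

Section GenQ.
Variable R : realFieldType.
Variables (S O A : finType).
Variables (p0 : S -> R) (pe : S -> O -> R) (pt : S -> A -> S -> R).
Variables (T : nat) (x : Qvars R S O A).
Hypothesis Hx : in_Qd p0 pe pt T x.

Lemma Qd_tsoa t : (t < T)%N -> forall s o a,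
  q_tsoa x t s o a = pe s o * q_nu x t s * q_del x t o a.
Proof.
move=> tT s o a.
case: Hx => Hdet [_ [Htsoa [_ [_ [_ [_ [_ Hmc]]]]]]].
have [h1 [h2 h3]] := Hmc t tT s o a.
have h0 := Htsoa t tT s o a.
case: (proj1 (Hdet t tT o) a) => Hd; rewrite Hd in h2 h3 *.
  by rewrite mulr0; apply: le_anti; rewrite h0 h2.
by rewrite mulr1; apply: le_anti; rewrite h1 /=; move: h3; rewrite addrK.
Qed.

Lemma Qd_tsas t : (t < T)%N -> q_nu x t =1 nuF p0 pe pt (q_del x) t ->
  forall s a s', q_tsas x t s a s' = tauF p0 pe pt (q_del x) t s a s'.
Proof.
move=> tT Hnu s a s'.
case: Hx => _ [_ [_ [_ [_ [_ [H3 [H4 _]]]]]]].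
rewrite (H4 t tT) (H3 t tT) /tauF; congr (_ * _); apply: eq_bigr => o _.
by rewrite Qd_tsoa // Hnu.
Qed.

Lemma Qd_nu t : (t <= T)%N -> q_nu x t =1 nuF p0 pe pt (q_del x) t.
Proof.
elim: t => [|t IH] tT s.
  by case: Hx => _ [_ [_ [_ [H1 _]]]]; rewrite /= H1.
rewrite /=; apply: eq_bigr => y _; apply: eq_bigr => a _.
by rewrite (Qd_tsas tT (IH (ltnW tT))).
Qed.
End GenQ.

Section Helpers.
Variable R : realFieldType.

Lemma elem_le_sum (X : finType) (f : X -> R) y0 : (forall y, 0 <= f y) -> f y0 <= \sum_y f y.
Proof. by move=> H; rewrite (bigD1 y0) //= lerDl sumr_ge0. Qed.

Lemma indic (X : finType) (f : X -> R) y0 : (forall y, 0 <= f y) ->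
  \sum_y f y = 1 -> f y0 = 1 -> forall y, f y = (y == y0)%:R.
Proof.
move=> ge0 Hs H1 y; case: (eqVneq y y0) => [->|ne] //.
have : \sum_(z | z != y0) f z = 0.
  by move: Hs; rewrite (bigD1 y0) //= H1 => /(canRL (addKr 1)); rewrite addNr.
by move/(psumr_eq0P (fun z _ => ge0 z))/(_ y ne) => ->.
Qed.

Lemma sum_indic (X : finType) (g : X -> R) y0 : \sum_y g y * (y == y0)%:R = g y0.
Proof.
rewrite (bigD1 y0) //= eqxx mulr1 big1 ?addr0 // => y /negbTE ->; by rewrite mulr0.
Qed.

Lemma prod01 (I : finType) (f : I -> R) : (forall i, 0 <= f i <= 1) -> \prod_i f i = 1 ->
  forall i, f i = 1.
Proof.
move=> H Hp i; apply: le_anti; have /andP[f0 f1] := H i; rewrite f1 /=.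
rewrite -Hp (bigD1 i) //=; apply: ler_piMr => //.
by apply: prodr_ile1 => j _; exact: H.
Qed.

Lemma nonempty_of_sum (X : finType) (f : X -> R) : \sum_x f x = 1 -> exists x : X, true.
Proof.
move=> Hs; case: (pickP (@predT X)) => [x _|H]; first by exists x.
move: Hs; rewrite big_pred0 => [/eqP|x]; first by rewrite eq_sym oner_eq0.
by have := H x.
Qed.

Lemma exists_max (X : finType) (f : X -> R) (x0 : X) : exists y, forall x, f x <= f y.
Proof.
exists (Order.arg_max x0 xpredT f); case: (Order.TotalTheory.arg_maxP f (i0:=x0) (P:=xpredT)) => // y _ Hy.
by move=> x; exact: Hy.
Qed.
End Helpers.

Section Build.
Variable R : realFieldType.
Variables (S O A : finType).
Variables (p0 : S -> R) (pe : S -> O -> R) (pt : S -> A -> S -> R).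
Variables (T : nat) (del : nat -> O -> A -> R).
Hypothesis Hpom : is_pomdp p0 pe pt.
Hypothesis Hmem : memoryless_policy T del.
Hypothesis Hdet : deterministic_policy T del.

Definition buildQ : Qvars R S O A :=
  mkQvars p0 (fun t s o a => pe s o * nuF p0 pe pt del t s * del t o a)
    (fun t => tauF p0 pe pt del t) del.

Lemma buildQ_nu t : q_nu buildQ t =1 nuF p0 pe pt del t.
Proof. by case: t. Qed.

Lemma buildQ_Qd : in_Qd p0 pe pt T buildQ.
Proof.
have [[Hp0 Hs0] [Hpe Hpt]] := Hpom.
have nu0 t : (t <= T)%N -> forall s, 0 <= nuF p0 pe pt del t s.
  apply: nuF_ge0 => //; first by move=> s o; case: (Hpe s).
    by move=> s a s'; case: (Hpt s a).
  by move=> t' t'T o a; case: (Hmem t'T o).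
have nu1 t : (t <= T)%N -> forall s, nuF p0 pe pt del t s <= 1.
  move=> tT s; rewrite -(nuF_sum (pe:=pe) (pt:=pt) (del:=del) (T:=T) Hs0 _ _ _ tT).
  - by apply: elem_le_sum => y; exact: nu0.
  - by move=> y; case: (Hpe y).
  - by move=> y a; case: (Hpt y a).
  - by move=> t' t'T o; case: (Hmem t'T o).
split.
  by move=> t tT o; split; [exact: Hdet | case: (Hmem tT o)].
split; first by [].
split.
  move=> t tT s o a /=; apply: mulr_ge0; last by case: (Hmem tT o).
  by apply: mulr_ge0; [case: (Hpe s) | exact: nu0 (ltnW tT) s].
split.
  move=> t tT s a s' /=; rewrite /tauF; apply: mulr_ge0; first by case: (Hpt s a).
  apply: sumr_ge0 => o _; apply: mulr_ge0; last by case: (Hmem tT o).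
  by apply: mulr_ge0; [case: (Hpe s) | exact: nu0 (ltnW tT) s].
split; first by [].
split.
  move=> t tT s; rewrite buildQ_nu /=.
  rewrite -[RHS]mulr1 -(proj2 (Hpe s)) mulr_sumr; apply: eq_bigr => o _.
  by rewrite -mulr_sumr (proj2 (Hmem tT o)) mulr1 mulrC.
have H3 t s a : \sum_sb tauF p0 pe pt del t s a sb = \sum_o pe s o * nuF p0 pe pt del t s * del t o a.
  by rewrite /tauF -mulr_suml (proj2 (Hpt s a)) mul1r.
split; first by move=> t tT s a /=; rewrite H3.
split; first by move=> t tT s a s' /=; rewrite H3.
move=> t tT s o a /=; rewrite buildQ_nu.
have pe0 : 0 <= pe s o by case: (Hpe s).
have pe1 : pe s o <= 1 by rewrite -(proj2 (Hpe s)); apply: elem_le_sum => y; case: (Hpe s).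
have n0 := nu0 t (ltnW tT) s; have n1 := nu1 t (ltnW tT) s.
have P0 : 0 <= pe s o * nuF p0 pe pt del t s by apply: mulr_ge0.
have P1 : pe s o * nuF p0 pe pt del t s <= 1 by apply: mulr_ile1.
case: (Hdet tT o a) => ->; rewrite ?mulr0 ?mulr1; split; lra.
Qed.
End Build.

Section Weak.
Variable R : realFieldType.
Variables (M q : nat) (S O A : 'I_M -> finType).
Variables (p0 : forall m, S m -> R) (pe : forall m, S m -> O m -> R)
          (pt : forall m, S m -> A m -> S m -> R)
          (rw : forall m, S m -> A m -> S m -> R)
          (D : forall m, A m -> 'I_q -> R) (b : 'I_q -> R).
Variable T : nat.

Lemma sumXA (F : jact A -> R) : (forall a, ~~ feasible_action D b a -> F a = 0) ->
  \sum_(a : XA D b) F (val a) = \sum_(a : jact A) F a.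
Proof.
move=> F0.
rewrite [RHS](bigID (feasible_action D b)) /= [X in _ + X]big1 ?addr0; last first.
  by move=> a /F0.
rewrite (reindex_omap (val : XA D b -> jact A) insub) => [|a Fa]; last by rewrite insubT.
by apply: eq_bigl => a; rewrite valP valK eqxx.
Qed.

Section Fixx.
Variable x : sol R S O A.
Variable del : nat -> jobs O -> XA D b -> R.
Hypothesis Hdelta : forall t, (t < T)%N -> forall o a,
  del t o a = \prod_m q_del (x m) t (o m) (val a m).
Hypothesis Hclos : forall t, (t < T)%N -> forall a : jact A, ~~ feasible_action D b a ->
  exists m, forall o, q_del (x m) t o (a m) = 0.

Definition nuM (m : 'I_M) := nuF (@p0 m) (@pe m) (@pt m) (q_del (x m)).
Definition tauM (m : 'I_M) := tauF (@p0 m) (@pe m) (@pt m) (q_del (x m)).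
Definition fnu := nuF (full_p0 p0) (full_pe pe) (@full_pt R M q S A pt D b) del.

Lemma full_tau t : (t < T)%N -> (forall s, fnu t s = \prod_m @nuM m t (s m)) ->
  forall s a s', tauF (full_p0 p0) (full_pe pe) (@full_pt R M q S A pt D b) del t s a s' =
    \prod_m @tauM m t (s m) (val a m) (s' m).
Proof.
move=> tT Hnu s a s'.
rewrite /tauF -/fnu Hnu.
have -> : \sum_o (full_pe pe s o * \prod_m @nuM m t (s m) * del t o a) =
  \sum_(o : jobs O) \prod_m (@pe m (s m) (o m) * @nuM m t (s m) * q_del (x m) t (o m) (val a m)).
  by apply: eq_bigr => o _; rewrite (Hdelta tT) /full_pe -!big_split.
rewrite (big_dffun_distr (fun m (y : O m) => @pe m (s m) y * @nuM m t (s m) * q_del (x m) t y (val a m))).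
by rewrite /full_pt -big_split.
Qed.

Lemma tau_zero t : (t < T)%N -> forall (a : jact A), ~~ feasible_action D b a ->
  forall s s', \prod_m @tauM m t (s m) (a m) (s' m) = 0.
Proof.
move=> tT a Fa s s'; have [m Hm] := Hclos tT Fa.
rewrite (bigD1 m) //= /tauM /tauF.
by rewrite big1 ?mulr0 ?mul0r // => o _; rewrite Hm mulr0.
Qed.

Lemma full_nu t : (t <= T)%N -> forall s, fnu t s = \prod_m @nuM m t (s m).
Proof.
elim: t => [|t IH] tT s'; first by [].
rewrite /fnu /= -/fnu.
have tT' : (t < T)%N by [].
under eq_bigr => s _ do under eq_bigr => a _ do
  rewrite -/(tauF (full_p0 p0) (full_pe pe) (@full_pt R M q S A pt D b) del t s a s') (full_tau tT' (IH (ltnW tT))).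
under eq_bigr => s _ do rewrite (@sumXA (fun a : jact A => \prod_m @tauM m t (s m) (a m) (s' m)) (fun a Fa => tau_zero tT' Fa s s')).
under eq_bigr => s _ do rewrite (big_dffun_distr (fun m (y : A m) => @tauM m t (s m) y (s' m))).
rewrite (big_dffun_distr (fun m (z : S m) => \sum_(y : A m) @tauM m t z y (s' m))).
by apply: eq_bigr => m _.
Qed.

Hypothesis HQ : forall m, in_Qd (@p0 m) (@pe m) (@pt m) T (x m).
Hypothesis Hpom : forall m, is_pomdp (@p0 m) (@pe m) (@pt m).
Hypothesis Hfull : forall t, (t < T)%N -> forall o, \sum_(a : XA D b) del t o a = 1.

Lemma tauM_sum m t : (t < T)%N -> \sum_x \sum_y \sum_z @tauM m t x y z = 1.
Proof.
move=> tT; rewrite /tauM tauF_sum.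
have [[_ H0] [H1 H2]] := Hpom m.
apply: (nuF_sum (T := T)) => //; first by move=> s; case: (H1 s).
  by move=> s a; case: (H2 s a).
by move=> t' t'T o; case: (HQ m) => Hd _; case: (Hd t' t'T o).
Qed.

Lemma full_value_eq : full_value p0 pe pt rw T del = milp_obj rw T x.
Proof.
rewrite /full_value value_eq; first last.
- exact: Hfull.
- move=> s a; rewrite /full_pt (big_dffun_distr (fun m (z : S m) => @pt m (s m) (val a m) z)).
  by apply: big1 => m _; have [_ [_ H2]] := Hpom m; case: (H2 (s m) (val a m)).
- move=> s; rewrite /full_pe (big_dffun_distr (fun m (z : O m) => @pe m (s m) z)).
  by apply: big1 => m _; have [_ [H1 _]] := Hpom m; case: (H1 (s m)).
rewrite /milp_obj; apply: eq_bigr => [[t tT]] _ /=.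
under eq_bigr => s _ do under eq_bigr => a _ do under eq_bigr => s' _ do
  rewrite (full_tau tT (full_nu (ltnW tT))) /full_rw.
have Z s (a : jact A) : ~~ feasible_action D b a ->
  \sum_(s' : jstate S) (\sum_m @rw m (s m) (a m) (s' m)) * \prod_m @tauM m t (s m) (a m) (s' m) = 0.
  by move=> Fa; apply: big1 => s' _; rewrite tau_zero ?mulr0.
under eq_bigr => s _ do rewrite (sumXA (Z s)).
have -> : \sum_(s : jstate S) \sum_(a : jact A) \sum_(s' : jstate S)
    (\sum_m @rw m (s m) (a m) (s' m)) * \prod_m @tauM m t (s m) (a m) (s' m) =
  \sum_m \sum_(s : jstate S) \sum_(a : jact A) \sum_(s' : jstate S)
    @rw m (s m) (a m) (s' m) * \prod_m @tauM m t (s m) (a m) (s' m).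
  under eq_bigr => s _ do under eq_bigr => a _ do under eq_bigr => s' _ do rewrite mulr_suml.
  under eq_bigr => s _ do under eq_bigr => a _ do rewrite exchange_big.
  under eq_bigr => s _ do rewrite exchange_big.
  by rewrite exchange_big.
apply: eq_bigr => m0 _.
pose G (m : 'I_M) (y : S m) (a : A m) (z : S m) :=
  @tauM m t y a z * (if m == m0 then @rw m y a z else 1).
have EG (s : jstate S) (a : jact A) (s' : jstate S) :
  @rw m0 (s m0) (a m0) (s' m0) * \prod_m @tauM m t (s m) (a m) (s' m) =
  \prod_m G m (s m) (a m) (s' m).
  rewrite /G [in RHS]big_split mulrC; congr (_ * _).
  rewrite (bigD1 m0) //= eqxx big1 ?mulr1 //.
  by move=> i /negbTE ->.
transitivity (\sum_(s : jstate S) \sum_(a : jact A) \sum_(s' : jstate S) \prod_m G m (s m) (a m) (s' m)).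
  by apply: eq_bigr => s _; apply: eq_bigr => a _; apply: eq_bigr => s' _; exact: EG.
under [in LHS]eq_bigr => s _ do under eq_bigr => a _ do rewrite (big_dffun_distr (fun m (z : S m) => G m (s m) (a m) z)).
under [in LHS]eq_bigr => s _ do rewrite (big_dffun_distr (fun m (y : A m) => \sum_(z : S m) G m (s m) y z)).
rewrite (big_dffun_distr (fun m (y : S m) => \sum_(a : A m) \sum_(z : S m) G m y a z)).
rewrite (bigD1 m0) //= [X in _ * X]big1 ?mulr1; last first.
  move=> m /negbTE mm0; rewrite /G mm0.
  under eq_bigr => y _ do under eq_bigr => a _ do under eq_bigr => z _ do rewrite mulr1.
  exact: tauM_sum.
rewrite /G eqxx.
have Hnu := Qd_nu (HQ m0).
apply: eq_bigr => y _; apply: eq_bigr => a _; apply: eq_bigr => z _.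
rewrite (Qd_tsas (HQ m0) tT (Hnu t (ltnW tT))) mulrC //.
Qed.
End Fixx.

Hypothesis Hpom : forall m, is_pomdp (@p0 m) (@pe m) (@pt m).

Lemma LB_clos (x : sol R S O A) : LB_feasible p0 pe pt D b T x ->
  forall t, (t < T)%N -> forall a : jact A, ~~ feasible_action D b a ->
  exists m, forall o, q_del (x m) t o (a m) = 0.
Proof.
move=> [HQ HLB] t tT a Fa.
case: (boolP [exists m, [forall o, q_del (x m) t o (a m) == 0]]) => [/existsP [m /forallP Hm]|].
  by exists m => o; apply/eqP.
rewrite negb_exists => /forallP H.
have Ho m : exists o, q_del (x m) t o (a m) != 0.
  by have := H m; rewrite negb_forall => /existsP.
pose oo : jobs O := finfun (fun m => xchoose (Ho m)).
have ind m : forall y, q_del (x m) t (oo m) y = (y == a m)%:R.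
  have [Hd _] := HQ m; have [H01 Hs] := Hd t tT (oo m).
  apply: indic => //; first by move=> y; case: (H01 y) => ->.
  rewrite ffunE; have := xchooseP (Ho m).
  by case: (proj1 (Hd t tT (xchoose (Ho m))) (a m)) => -> //; rewrite eqxx.
exfalso; move/negP: Fa; apply; apply/forallP => i.
have := HLB oo t tT i.
under eq_bigr => m _ do under eq_bigr => y _ do rewrite ind.
by under eq_bigr => m _ do rewrite sum_indic.
Qed.

Lemma prod_policy_props (x : sol R S O A) : LB_feasible p0 pe pt D b T x ->
  full_policy T (@product_policy R M q S O A D b x) /\
  deterministic_policy T (@product_policy R M q S O A D b x) /\
  decomposable T (@product_policy R M q S O A D b x).
Proof.
move=> HLB; have [HQ _] := HLB.
have Hd01 m t : (t < T)%N -> forall o a, q_del (x m) t o a = 0 \/ q_del (x m) t o a = 1.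
  by move=> tT o a; have [Hd _] := HQ m; case: (Hd t tT o) => H _; exact: H.
have Hsum m t : (t < T)%N -> forall o, \sum_a q_del (x m) t o a = 1.
  by move=> tT o; have [Hd _] := HQ m; case: (Hd t tT o).
split.
  move=> t tT o; split.
    by move=> a; apply: prodr_ge0 => m _; case: (Hd01 m t tT (o m) (val a m)) => ->.
  rewrite /product_policy.
  have Z (a : jact A) : ~~ feasible_action D b a -> \prod_m q_del (x m) t (o m) (a m) = 0.
    move=> Fa; have [m Hm] := LB_clos HLB tT Fa.
    by rewrite (bigD1 m) //= Hm mul0r.
  rewrite (sumXA Z) (big_dffun_distr (fun m (y : A m) => q_del (x m) t (o m) y)).
  by apply: big1 => m _; apply: Hsum.
split.
  move=> t tT o a; rewrite /product_policy.
  apply: (big_ind (fun v : R => v = 0 \/ v = 1)); first by right.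
    by move=> u v [->|->] [->|->]; rewrite ?mulr0 ?mul0r ?mulr1; [left|left|left|right].
  by move=> m _; exact: Hd01.
exists (fun m => q_del (x m)); split => //.
move=> m t tT o; split; last exact: Hsum.
by move=> a; case: (Hd01 m t tT o a) => ->.
Qed.

Lemma opt_other (delta' : nat -> jobs O -> XA D b -> R) :
  full_policy T delta' -> deterministic_policy T delta' -> decomposable T delta' ->
  exists x' : sol R S O A, LB_feasible p0 pe pt D b T x' /\
    full_value p0 pe pt rw T delta' = milp_obj rw T x'.
Proof.
move=> Hf Hd [delm [Hmem Heq]].
have Oinh m : exists o : O m, true.
  have [[_ Hs0] [Hpe _]] := Hpom m.
  have [s0 _] := nonempty_of_sum Hs0.
  exact: nonempty_of_sum (proj2 (Hpe s0)).
pose od := fun m => xchoose (Oinh m).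
have le1 m t : (t < T)%N -> forall y z, 0 <= delm m t y z <= 1.
  move=> tT y z; have [H0 H1] := Hmem m t tT y; rewrite H0 /= -H1; exact: elem_le_sum.
have Hkey t : (t < T)%N -> forall o : jobs O, exists a : XA D b, forall m, delm m t (o m) (val a m) = 1.
  move=> tT o; have [Hnn Hs] := Hf t tT o.
  have [a Ha] : exists a, delta' t o a != 0.
    case: (boolP [exists a, delta' t o a != 0]) => [/existsP//|].
    rewrite negb_exists => /forallP H0; move: Hs; rewrite big1 => [/eqP|a _].
      by rewrite eq_sym oner_eq0.
    by move/negPn/eqP: (H0 a).
  have Ha1 : delta' t o a = 1 by case: (Hd t tT o a) Ha => ->; rewrite ?eqxx.
  exists a; apply: prod01; first by move=> m; exact: le1.
  by rewrite -(Heq t tT o a).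
have Hdet m : deterministic_policy T (delm m).
  move=> t tT y z.
  have [a Ha] := Hkey t tT (finfun (dfwith od y) : jobs O).
  have := Ha m; rewrite ffunE dfwith_in => H1.
  have [H0 Hs] := Hmem m t tT y.
  rewrite (indic H0 Hs H1 z); case: eqP => _; [right|left] => //.
pose x' : sol R S O A := fun m => buildQ (@p0 m) (@pe m) (@pt m) (delm m).
have HQ m : in_Qd (@p0 m) (@pe m) (@pt m) T (x' m) by apply: buildQ_Qd.
have HLB : LB_feasible p0 pe pt D b T x'.
  split => // o t tT i.
  have [a Ha] := Hkey t tT o.
  have ind m := indic (proj1 (Hmem m t tT (o m))) (proj2 (Hmem m t tT (o m))) (Ha m).
  rewrite /x' /=.
  under eq_bigr => m _ do under eq_bigr => y _ do rewrite ind.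
  under eq_bigr => m _ do rewrite sum_indic.
  by have /forallP := valP a; apply.
exists x'; split => //.
apply: full_value_eq => //.
- exact: LB_clos HLB.
- by move=> t tT o; case: (Hf t tT o).
Qed.

Lemma LB_IP (x : sol R S O A) : LB_feasible p0 pe pt D b T x -> IP_feasible p0 pe pt D b T x.
Proof.
move=> HLB; have [HQ HLB'] := HLB; split => // t tT i.
have E m : \sum_a D a i * (\sum_s \sum_o q_tsoa (x m) t s o a) =
   \sum_o (\sum_s @pe m s o * q_nu (x m) t s) * (\sum_a D a i * q_del (x m) t o a).
  under eq_bigr => a _ do under eq_bigr => s _ do under eq_bigr => o _ do rewrite (Qd_tsoa (HQ m) tT).
  under eq_bigr => a _ do rewrite mulr_sumr.
  under eq_bigr => a _ do under eq_bigr => s _ do rewrite mulr_sumr.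
  under eq_bigr => a _ do rewrite exchange_big.
  rewrite exchange_big; apply: eq_bigr => o _.
  rewrite exchange_big mulr_suml; apply: eq_bigr => s _.
  rewrite mulr_sumr; apply: eq_bigr => a _.
  by ring.
pose g m (o : O m) := \sum_s @pe m s o * q_nu (x m) t s.
pose f m (o : O m) := \sum_a D a i * q_del (x m) t o a.
have Hd01 m y z : q_del (x m) t y z = 0 \/ q_del (x m) t y z = 1.
  by have [Hd _] := HQ m; case: (Hd t tT y) => H _; exact: H.
have nu0 m s : 0 <= q_nu (x m) t s.
  rewrite (Qd_nu (HQ m) (ltnW tT)).
  have [[Hp0 _] [Hpe Hpt]] := Hpom m.
  have Hpe' : forall y o, 0 <= @pe m y o by move=> y o; case: (Hpe y).
  have Hpt' : forall y a s', 0 <= @pt m y a s' by move=> y a s'; case: (Hpt y a).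
  have Hdl : forall t', (t' < T)%N -> forall o a, 0 <= q_del (x m) t' o a.
    by move=> t' t'T o a; have [Hd _] := HQ m; case: (proj1 (Hd t' t'T o) a) => ->.
  exact: (nuF_ge0 Hp0 Hpe' Hpt' Hdl (ltnW tT)).
have g0 m o : 0 <= g m o.
  apply: sumr_ge0 => s _; apply: mulr_ge0 => //.
  by have [_ [Hpe _]] := Hpom m; case: (Hpe s).
have g1 m : \sum_o g m o = 1.
  rewrite /g exchange_big /=.
  have [[_ Hs0] [Hpe Hpt]] := Hpom m.
  rewrite -(nuF_sum (pe := @pe m) (pt := @pt m) (del := q_del (x m)) (T := T) Hs0 _ _ _ (ltnW tT)).
  - apply: eq_bigr => s _; rewrite -mulr_suml (proj2 (Hpe s)) mul1r.
    by rewrite (Qd_nu (HQ m) (ltnW tT)).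
  - by move=> y; case: (Hpe y).
  - by move=> y a; case: (Hpt y a).
  - by move=> t' t'T o; have [Hd _] := HQ m; case: (Hd t' t'T o).
have Hmx m : exists o, [forall o', f m o' <= f m o].
  have [o0 _] := nonempty_of_sum (g1 m); have [o Ho] := exists_max (f m) o0.
  by exists o; apply/forallP.
pose oo : jobs O := finfun (fun m => xchoose (Hmx m)).
apply: le_trans (HLB' oo t tT i).
apply: ler_sum => m _; rewrite E ffunE.
have /forallP Hm := xchooseP (Hmx m).
apply: le_trans (_ : \sum_o g m o * f m (xchoose (Hmx m)) <= _).
  by apply: ler_sum => o _; apply: ler_wpM2l; [exact: g0 | exact: Hm].
by rewrite -mulr_suml g1 mul1r.
Qed.
End Weak.

Unset Implicit Arguments.

Theorem mainTheorem5
  (R : realFieldType) (M q : nat) (S O A : 'I_M -> finType)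
  (p0 : forall m, S m -> R) (pe : forall m, S m -> O m -> R)
  (pt : forall m, S m -> A m -> S m -> R)
  (rw : forall m, S m -> A m -> S m -> R)
  (D : forall m, A m -> 'I_q -> R) (b : 'I_q -> R) (T : nat)
  (* each component is a POMDP *)
  (Hpomdp : forall m, is_pomdp (@p0 m) (@pe m) (@pt m))
  (* b >= 0 *)
  (Hb : forall i, 0 <= b i)
  (* X_A nonempty *)
  (HXA : exists a : jact A, feasible_action D b a)
  (* (tau^m, delta^m)_m optimal solution of MILP (LB) *)
  (xopt : sol R S O A)
  (Hfeas : LB_feasible p0 pe pt D b T xopt)
  (Hopt : forall x : sol R S O A, LB_feasible p0 pe pt D b T x ->
            milp_obj rw T x <= milp_obj rw T xopt) :
  let delta := @product_policy R M q S O A D b xopt in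
  (* delta is an optimal deterministic decomposable memoryless policy *)
  (full_policy T delta /\ deterministic_policy T delta /\ decomposable T delta /\
   forall delta' : nat -> jobs O -> XA D b -> R,
     full_policy T delta' -> deterministic_policy T delta' ->
     decomposable T delta' ->
     full_value p0 pe pt rw T delta' <= full_value p0 pe pt rw T delta) /\
  (* (IP) is a relaxation of (LB) *)
  (forall x : sol R S O A, LB_feasible p0 pe pt D b T x -> IP_feasible p0 pe pt D b T x) /\
  (* z_LB <= v*_ml *)
  (exists delta' : nat -> jobs O -> XA D b -> R,
     full_policy T delta' /\ milp_obj rw T xopt <= full_value p0 pe pt rw T delta') /\
  (* z_LB <= z_IP *)
  (exists x : sol R S O A, IP_feasible p0 pe pt D b T x /\
     milp_obj rw T xopt <= milp_obj rw T x).
Proof.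
move=> delta.
have [Hfp [Hdp Hdec]] := prod_policy_props Hfeas.
have Hval : full_value p0 pe pt rw T delta = milp_obj rw T xopt.
  apply: (@full_value_eq R M q S O A p0 pe pt rw D b T xopt delta) => //.
  - exact: LB_clos Hfeas.
  - exact: (proj1 Hfeas).
  - by move=> t tT o; case: (Hfp t tT o).
split; first (split => //; split => //; split => //).
  move=> delta' Hf' Hd' Hdec'.
  have [x' [HLB' Hv']] := opt_other rw Hpomdp Hf' Hd' Hdec'.
  by rewrite Hv' Hval; apply: Hopt.
split; first by move=> x Hx; apply: (@LB_IP R M q S O A p0 pe pt D b T Hpomdp x Hx).
split; first by exists delta; split => //; rewrite Hval.
by exists xopt; split => //; apply: (@LB_IP R M q S O A p0 pe pt D b T Hpomdp xopt Hfeas).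
Qed.
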